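(* Let $\alpha_i,\beta_i,\gamma_i,\delta_i\in(0,\pi)$ satisfy $\alpha_i\pm\beta_i\pm\gamma_i\pm\delta_i\not\equiv0\pmod{2\pi}$ for all choices of signs. Then $\sin\overline{\alpha}_i,\sin\overline{\beta}_i,\sin\overline{\gamma}_i,\sin\overline{\delta}_i\neq0$ (so $a_i,b_i,c_i,d_i$ are well-defined) and \[a_ib_i,\ a_ic_i,\ a_id_i,\ b_ic_i,\ b_id_i,\ c_id_i,\ M_i\notin\{0,1\}.\]
   Context: $\sigma_i=(\alpha_i+\beta_i+\gamma_i+\delta_i)/2$, $\overline{\alpha}_i=\sigma_i-\alpha_i$, $\overline{\beta}_i=\sigma_i-\beta_i$, $\overline{\gamma}_i=\sigma_i-\gamma_i$, $\overline{\delta}_i=\sigma_i-\delta_i$; $a_i=\sin\alpha_i/\sin\overline{\alpha}_i$, $b_i=\sin\beta_i/\sin\overline{\beta}_i$, $c_i=\sin\gamma_i/\sin\overline{\gamma}_i$, $d_i=\sin\delta_i/\sin\overline{\delta}_i$, $M_i=a_ib_ic_id_i$. *)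

(* Defs.v *)
From Stdlib Require Import Reals ZArith.
Open Scope R_scope.

Definition sgn (b : bool) : R := if b then 1 else -1.

Definition not_cong0_2pi (x : R) : Prop := forall k : Z, x <> 2 * PI * IZR k.

Definition sigma (al be ga de : R) : R := (al + be + ga + de) / 2.

Definition bar (x al be ga de : R) : R := sigma al be ga de - x.

Definition ratio (x al be ga de : R) : R := sin x / sin (bar x al be ga de).

Definition coef_a (al be ga de : R) : R := ratio al al be ga de.
Definition coef_b (al be ga de : R) : R := ratio be al be ga de.
Definition coef_c (al be ga de : R) : R := ratio ga al be ga de.
Definition coef_d (al be ga de : R) : R := ratio de al be ga de.

Definition coef_M (al be ga de : R) : R :=
  coef_a al be ga de * coef_b al be ga de * coef_c al be ga de * coef_d al be ga de.

Definition not01 (x : R) : Prop := x <> 0 /\ x <> 1.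

(* Main.v *)
Require Import Defs.
From Stdlib Require Import Reals ZArith Lra.
Open Scope R_scope.

Lemma prod_sin x y : 2 * sin x * sin y = cos (x - y) - cos (x + y).
Proof. rewrite cos_minus, cos_plus; ring. Qed.

Lemma half_sin_ne x : not_cong0_2pi x -> sin (x / 2) <> 0.
Proof.
  intros H Hs. destruct (sin_eq_0_0 _ Hs) as [k Hk].
  apply (H k). lra.
Qed.

Lemma cos_ne x y : not_cong0_2pi (x - y) -> not_cong0_2pi (x + y) -> cos x <> cos y.
Proof.
  intros H1 H2 He.
  assert (Hf := prod_sin ((x + y) / 2) ((x - y) / 2)).
  replace ((x + y) / 2 - (x - y) / 2) with y in Hf by field.
  replace ((x + y) / 2 + (x - y) / 2) with x in Hf by field.
  rewrite He, Rminus_diag in Hf.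
  apply Rmult_integral in Hf as [Hf|Hf].
  - apply Rmult_integral in Hf as [Hf|Hf]; [lra|].
    exact (half_sin_ne _ H2 Hf).
  - exact (half_sin_ne _ H1 Hf).
Qed.

Lemma pair S x y : sin x <> 0 -> sin y <> 0 -> sin (S - x) <> 0 -> sin (S - y) <> 0 ->
  cos (x + y) <> cos (2 * S - x - y) ->
  not01 (sin x / sin (S - x) * (sin y / sin (S - y))).
Proof.
  intros h1 h2 h3 h4 hc. split.
  - unfold Rdiv. repeat apply Rmult_integral_contrapositive_currified; auto;
      apply Rinv_neq_0_compat; auto.
  - intro E. apply hc.
    assert (E2 : sin x * sin y = sin (S - x) * sin (S - y)).
    { transitivity (sin x / sin (S - x) * (sin y / sin (S - y)) * (sin (S - x) * sin (S - y))).
      field; auto. rewrite E; ring. }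
    assert (P1 := prod_sin x y). assert (P2 := prod_sin (S - x) (S - y)).
    replace (S - x - (S - y)) with (- (x - y)) in P2 by ring.
    replace (S - x + (S - y)) with (2 * S - x - y) in P2 by ring.
    rewrite cos_neg in P2. lra.
Qed.

Lemma quad S x y z w : x + y + z + w = 2 * S ->
  sin x <> 0 -> sin y <> 0 -> sin z <> 0 -> sin w <> 0 ->
  sin (S - x) <> 0 -> sin (S - y) <> 0 -> sin (S - z) <> 0 -> sin (S - w) <> 0 ->
  cos (x + y) <> cos (z + w) -> cos (x - y) <> cos (z - w) ->
  not01 (sin x / sin (S - x) * (sin y / sin (S - y)) * (sin z / sin (S - z)) * (sin w / sin (S - w))).
Proof.
  intros hS h1 h2 h3 h4 h5 h6 h7 h8 c1 c2. split.
  - unfold Rdiv. repeat apply Rmult_integral_contrapositive_currified; auto;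
      apply Rinv_neq_0_compat; auto.
  - intro E.
    assert (E2 : sin x * sin y * (sin z * sin w) = sin (S - x) * sin (S - y) * (sin (S - z) * sin (S - w))).
    { transitivity (sin x / sin (S - x) * (sin y / sin (S - y)) * (sin z / sin (S - z)) * (sin w / sin (S - w)) * (sin (S - x) * sin (S - y) * (sin (S - z) * sin (S - w)))).
      field; auto. rewrite E; ring. }
    assert (P1 := prod_sin x y). assert (P2 := prod_sin (S - x) (S - y)).
    assert (P3 := prod_sin z w). assert (P4 := prod_sin (S - z) (S - w)).
    replace (S - x - (S - y)) with (- (x - y)) in P2 by ring.
    replace (S - x + (S - y)) with (z + w) in P2 by lra.
    replace (S - z - (S - w)) with (- (z - w)) in P4 by ring.
    replace (S - z + (S - w)) with (x + y) in P4 by lra.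
    rewrite cos_neg in P2, P4.
    assert (K0 : (2*sin x*sin y)*(2*sin z*sin w) = (2*sin(S-x)*sin(S-y))*(2*sin(S-z)*sin(S-w))).
    { transitivity (4*(sin x*sin y*(sin z*sin w))); [ring| rewrite E2; ring]. }
    rewrite P1, P2, P3, P4 in K0.
    assert (K : (cos (x - y) - cos (z - w)) * (cos (x + y) - cos (z + w)) = 0).
    { transitivity ((cos (x - y) - cos (x + y)) * (cos (z - w) - cos (z + w)) - (cos (x - y) - cos (z + w)) * (cos (z - w) - cos (x + y))); [ring | lra]. }
    apply Rmult_integral in K as [K|K]; lra.
Qed.

Lemma sin_pos_ne x : 0 < x < PI -> sin x <> 0.
Proof. intros [h1 h2]. apply Rgt_not_eq, sin_gt_0; auto. Qed.

Ltac nc_tac :=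
  let k := fresh "k" in let Hk := fresh "Hk" in
  unfold Defs.sigma; intros k Hk;
  match goal with
  | H : not_cong0_2pi _ |- _ =>
      first [ apply (H k); unfold sgn in *; lra
            | apply (H (- k)%Z); rewrite opp_IZR; unfold sgn in *; lra ]
  end.

Theorem lemma2 (al be ga de : R)
  (hal : 0 < al < PI) (hbe : 0 < be < PI) (hga : 0 < ga < PI) (hde : 0 < de < PI)
  (hsigns : forall s1 s2 s3 : bool,
      not_cong0_2pi (al + sgn s1 * be + sgn s2 * ga + sgn s3 * de)) :
  let a := coef_a al be ga de in
  let b := coef_b al be ga de in
  let c := coef_c al be ga de in
  let d := coef_d al be ga de in
  (sin (bar al al be ga de) <> 0 /\ sin (bar be al be ga de) <> 0 /\
   sin (bar ga al be ga de) <> 0 /\ sin (bar de al be ga de) <> 0) /\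
  (not01 (a * b) /\ not01 (a * c) /\ not01 (a * d) /\
   not01 (b * c) /\ not01 (b * d) /\ not01 (c * d) /\
   not01 (coef_M al be ga de)).
Proof.
  pose proof (hsigns true true true) as H1.
  pose proof (hsigns true true false) as H2.
  pose proof (hsigns true false true) as H3.
  pose proof (hsigns true false false) as H4.
  pose proof (hsigns false true true) as H5.
  pose proof (hsigns false true false) as H6.
  pose proof (hsigns false false true) as H7.
  pose proof (hsigns false false false) as H8.
  clear hsigns.
  set (Sg := Defs.sigma al be ga de).
  assert (sA : sin (Sg - al) <> 0).
  { replace (Sg - al) with ((- al + be + ga + de) / 2) by (unfold Sg, Defs.sigma; field).
    apply half_sin_ne; nc_tac. }
  assert (sB : sin (Sg - be) <> 0).
  { replace (Sg - be) with ((al - be + ga + de) / 2) by (unfold Sg, Defs.sigma; field).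
    apply half_sin_ne; nc_tac. }
  assert (sC : sin (Sg - ga) <> 0).
  { replace (Sg - ga) with ((al + be - ga + de) / 2) by (unfold Sg, Defs.sigma; field).
    apply half_sin_ne; nc_tac. }
  assert (sD : sin (Sg - de) <> 0).
  { replace (Sg - de) with ((al + be + ga - de) / 2) by (unfold Sg, Defs.sigma; field).
    apply half_sin_ne; nc_tac. }
  pose proof (sin_pos_ne _ hal). pose proof (sin_pos_ne _ hbe).
  pose proof (sin_pos_ne _ hga). pose proof (sin_pos_ne _ hde).
  assert (HS : 2 * Sg = al + be + ga + de) by (unfold Sg, Defs.sigma; field).
  cbv zeta. unfold coef_M, coef_a, coef_b, coef_c, coef_d, ratio, bar. fold Sg.
  split; [repeat split; assumption|].
  assert (HM : not01 (sin al / sin (Sg - al) * (sin be / sin (Sg - be)) *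
     (sin ga / sin (Sg - ga)) * (sin de / sin (Sg - de)))).
  { apply quad; auto; try lra; apply cos_ne; nc_tac. }
  repeat match goal with |- _ /\ _ => split end;
  try exact HM;
  apply pair; auto; rewrite HS; apply cos_ne; nc_tac.
Qed.
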